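(* For $n=1,2,\dots$ let $\Phi_{W^{(n)}}$ be a source pmf on countable $\mathcal W^{(n)}$, $\Phi_{U^{(n)}|W^{(n)}}$ a codebook distribution on countable $\mathcal U^{(n)}$, and $\Phi_{V^{(n)}|W^{(n)},U^{(n)}}$ a channel to countable $\mathcal V^{(n)}$. Let $\mathcal B^{(n)}=\{u^{(n)}(w)\}_{w\in\mathcal W^{(n)}}$ have independent entries with $u^{(n)}(w)\sim\Phi_{U^{(n)}|W^{(n)}=w}$, let $P_{V^{(n)}}(v)=\sum_w\Phi_{W^{(n)}}(w)\Phi_{V^{(n)}|W^{(n)},U^{(n)}}(v|w,u^{(n)}(w))$, and let $Q_{V^{(n)}}=\Phi_{V^{(n)}}$ be the $V^{(n)}$-marginal of $\Phi_{W^{(n)}}\Phi_{U^{(n)}|W^{(n)}}\Phi_{V^{(n)}|W^{(n)},U^{(n)}}$. If for every $\tau\in\mathbb R$, $\mathbf P_\Phi\big(i_\Phi(W^{(n)},U^{(n)};V^{(n)})-i_\Phi(W^{(n)})>\tau\big)\to0$ as $n\to\infty$, then $\lim_{n\to\infty}\mathbf E\|P_{V^{(n)}}-Q_{V^{(n)}}\|_{TV}=0$.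
   Context: Expectation is over the random codebook. $i_\Phi(w,u;v)=\log\frac{\Phi_{V|W,U}(v|w,u)}{\Phi_V(v)}$ and $i_\Phi(w)=\log\frac1{\Phi_W(w)}$, base 2. Total variation is half the $\ell_1$ distance. *)

(* Defs.v *)
From HB Require Import structures.
From mathcomp Require Import all_boot all_order all_algebra.
From mathcomp Require Import all_classical all_reals all_analysis.
Set Implicit Arguments. Unset Strict Implicit. Unset Printing Implicit Defensive.
Import Order.TTheory GRing.Theory Num.Theory.
Local Open Scope classical_set_scope.
Local Open Scope ring_scope.

Section Defs.
Variable R : realType.

Definition is_pmf (T : countType) (p : T -> R) : Prop :=
  (forall t, 0 <= p t) /\ (\esum_(t in [set: T]) (p t)%:E = 1)%E.

Definition log2 (x : R) : R := ln x / ln 2.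

Variables (W U V : countType).
Variables (PhiW : W -> R) (PhiU : W -> U -> R) (PhiV : W -> U -> V -> R).

Definition joint (x : (W * U) * V) : R :=
  PhiW x.1.1 * PhiU x.1.1 x.1.2 * PhiV x.1.1 x.1.2 x.2.

Definition PhiVmarg (v : V) : R :=
  fine (\esum_(x in [set: W * U]) (PhiW x.1 * PhiU x.1 x.2 * PhiV x.1 x.2 v)%:E).

Definition info_WU_V (w : W) (u : U) (v : V) : R :=
  log2 (PhiV w u v / PhiVmarg v).

Definition info_W (w : W) : R := log2 (1 / PhiW w).

Definition prob_info_gt (tau : R) : \bar R :=
  \esum_(x in [set x : (W * U) * V | 0 < joint x /\
          info_WU_V x.1.1 x.1.2 x.2 - info_W x.1.1 > tau]) (joint x)%:E.

Definition PV_code (c : W -> U) (v : V) : R :=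
  fine (\esum_(w in [set: W]) (PhiW w * PhiV w (c w) v)%:E).

Definition tv_dist (P Q : V -> R) : \bar R :=
  ((2%:R)^-1)%:E * \esum_(v in [set: V]) (`|P v - Q v|)%:E.

(* A random codebook on (Omega, Pr): each entry u w is a discrete random variable,
   the entries are mutually independent and u w ~ PhiU w. *)
Definition random_codebook (d : measure_display) (Omega : measurableType d)
    (Pr : probability Omega R) (u : W -> Omega -> U) : Prop :=
  (forall w a, measurable [set om | u w om = a]) /\
  (forall (s : seq W), uniq s -> forall a : W -> U,
      Pr [set om | forall w, w \in s -> u w om = a w]
      = (\prod_(w <- s) PhiU w (a w))%:E).

End Defs.

(* Main.v *)
Require Import Defs.
From HB Require Import structures.
From mathcomp Require Import all_boot all_order all_algebra.
From mathcomp Require Import all_classical all_reals all_analysis.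
From mathcomp Require Import measurable_realfun.
From mathcomp Require Import ring lra.
Import Order.TTheory GRing.Theory Num.Theory.
Local Open Scope classical_set_scope.
Local Open Scope ring_scope.
Section Gen.
Local Open Scope ereal_scope.
Context {R : realType}.

Definition cn {T : countType} (a : T -> \bar R) (k : nat) : \bar R :=
  if pickle_inv k is Some t then a t else 0.

Lemma esum_cnt (T : countType) (a : T -> \bar R) : (forall t, 0 <= a t) ->
  \esum_(t in [set: T]) a t = \sum_(k <oo) cn a k.
Proof.
move=> a0.
have c0 k : 0 <= cn a k by rewrite /cn; case: pickle_inv.
rewrite nneseries_esumT // (esumID (range (@pickle T))); last by [].
rewrite [X in _ + X]esum1 ?adde0; last first.
  move=> k [_ /= nk]; rewrite /cn; have := @pickle_invK T k.
  case: pickle_inv => [t /= tk|//].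
  by exfalso; apply: nk; exists t.
rewrite setTI esum_image; last by move=> x y _ _; exact: (pcan_inj (@pickleK T)).
apply: eq_esum => t _; by rewrite /cn pickleK_inv.
Qed.

Lemma esumZl (T : countType) (c : R) (a : T -> \bar R) : (0 <= c)%R ->
  (forall t, 0 <= a t) ->
  \esum_(t in [set: T]) (c%:E * a t) = c%:E * \esum_(t in [set: T]) a t.
Proof.
move=> c0 a0; rewrite !esum_cnt //; last by move=> t; rewrite mule_ge0.
rewrite -nneseriesZl; last by move=> k _; rewrite /cn; case: pickle_inv.
by apply: eq_eseriesr => k _; rewrite /cn; case: pickle_inv => //; rewrite mule0.
Qed.

Lemma esum_single (T : countType) (a : T -> \bar R) (t0 : T) :
  (forall t, t <> t0 -> a t = 0) -> 0 <= a t0 ->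
  \esum_(t in [set: T]) a t = a t0.
Proof.
move=> a0 at0; rewrite (esumID [set t0]); last first.
  by move=> t _; have [->//|/eqP/a0 ->] := eqVneq t t0.
rewrite setTI esum_set1 // esum1 ?adde0 //.
by move=> t [_ /= h]; apply: a0.
Qed.

Context d (Omega : measurableType d) (mu : {measure set Omega -> \bar R}).

Lemma measurable_esum (T : countType) (f : T -> Omega -> \bar R) :
  (forall t, measurable_fun setT (f t)) -> (forall t x, 0 <= f t x) ->
  measurable_fun setT (fun x => \esum_(t in [set: T]) f t x).
Proof.
move=> mf f0.
rewrite (_ : (fun x => _) = fun x => \sum_(k <oo | k \in predT) cn (f^~ x) k).
  apply: ge0_emeasurable_sum.
    by move=> k x _ _; rewrite /cn; case: pickle_inv.
  by move=> k _; rewrite /cn; case: pickle_inv.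
by apply/funext => x; rewrite esum_cnt.
Qed.

Lemma integral_esum (T : countType) (f : T -> Omega -> \bar R) :
  (forall t, measurable_fun setT (f t)) -> (forall t x, 0 <= f t x) ->
  \int[mu]_x (\esum_(t in [set: T]) f t x)
  = \esum_(t in [set: T]) \int[mu]_x (f t x).
Proof.
move=> mf f0.
rewrite esum_cnt; last by move=> t; apply: integral_ge0.
under eq_integral do rewrite esum_cnt //.
rewrite integral_nneseries //.
- by apply: eq_eseriesr => k _; rewrite /cn; case: pickle_inv => //; rewrite integral0.
- by move=> k; rewrite /cn; case: pickle_inv.
- by move=> k x _; rewrite /cn; case: pickle_inv.
Qed.

End Gen.
Section Disc.
Local Open Scope ereal_scope.
Context {R : realType} (W U : countType) (PhiU : W -> U -> R)
  d (Omega : measurableType d) (Pr : probability Omega R) (u : W -> Omega -> U).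
Hypothesis hc : random_codebook PhiU Pr u.

Lemma mdisc d' (Y : measurableType d') w (F : U -> Y) :
  measurable_fun setT (fun om => F (u w om)).
Proof.
move=> _ B mB; rewrite setTI.
have -> : (fun om => F (u w om)) @^-1` B = \bigcup_(k in [set: nat])
   (if @pickle_inv U k is Some a then [set om | u w om = a] `&` [set _ | B (F a)]
    else set0).
  apply/seteqP; split => [om /= Bom|om [k _]].
    exists (pickle (u w om)) => //; rewrite pickleK_inv; split => //.
  by case: pickle_inv => [a [/= <-]|//].
apply: bigcupT_measurable => k; case: pickle_inv => [a|//].
apply: measurableI; first exact: hc.1.
have [h|h] := pselect (B (F a)).
  by rewrite (_ : [set _ | _] = setT) //; apply/seteqP; split.
by rewrite (_ : [set _ | _] = set0) //; apply/seteqP; split.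
Qed.

Lemma prob1 w a : Pr [set om | u w om = a] = (PhiU w a)%:E.
Proof.
have := hc.2 [:: w] erefl (fun _ => a); rewrite big_seq1 => <-.
congr (Pr _); apply/seteqP; split => om /=.
  by move=> h w'; rewrite mem_seq1 => /eqP ->.
by move=> /(_ w); rewrite mem_seq1 eqxx => ->.
Qed.

Lemma prob2 w w' a b : w != w' ->
  Pr [set om | u w om = a /\ u w' om = b] = (PhiU w a * PhiU w' b)%:E.
Proof.
move=> ww'.
have uq : uniq [:: w; w'] by rewrite /= inE ww'.
have := hc.2 [:: w; w'] uq (fun x => if x == w then a else b).
rewrite big_cons big_seq1 eqxx eq_sym (negbTE ww') => <-.
congr (Pr _); apply/seteqP; split => om /=.
  move=> [h1 h2] x; rewrite !inE => /orP[] /eqP ->; first by rewrite eqxx.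
  by rewrite eq_sym (negbTE ww').
move=> h; split; first by have := h w; rewrite !inE eqxx => ->.
by have := h w'; rewrite !inE eqxx orbT eq_sym (negbTE ww') => ->.
Qed.

Lemma exp1 w (F : U -> R) : (forall a, (0 <= F a)%R) ->
  \int[Pr]_om (F (u w om))%:E = \esum_(a in [set: U]) (F a * PhiU w a)%:E.
Proof.
move=> F0.
have e om : (F (u w om))%:E = \esum_(a in [set: U])
    ((F a)%:E * (\1_[set om | u w om = a] om)%:E).
  rewrite (@esum_single _ _ _ (u w om)).
  - by rewrite indicE mem_set // mule1.
  - move=> a ha; rewrite indicE memNset ?mule0 //.
    by move=> /= h; apply: ha.
  - by rewrite mule_ge0 // lee_fin.
under eq_integral do rewrite e.
rewrite integral_esum; last 2 first.
- move=> a; apply: measurable_funeM; apply/measurable_EFinP.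
  by apply: measurable_indic; exact: hc.1.
- by move=> a om; rewrite mule_ge0 // lee_fin.
apply: eq_esum => a _.
rewrite ge0_integralZl_EFin //; last first.
  apply/measurable_EFinP.
  by apply: measurable_indic; exact: hc.1.
rewrite integral_indic ?setIT //; last exact: hc.1.
by rewrite EFinM; congr (_ * _); apply: prob1.
Qed.

End Disc.
Section Disc2.
Local Open Scope ereal_scope.
Context {R : realType} (W U : countType) (PhiU : W -> U -> R)
  d (Omega : measurableType d) (Pr : probability Omega R) (u : W -> Omega -> U).
Hypothesis hc : random_codebook PhiU Pr u.
Hypothesis PhiU0 : forall w a, (0 <= PhiU w a)%R.

Lemma esum_prod (T1 T2 : countType) (f : T1 -> R) (g : T2 -> R) :
  (forall a, (0 <= f a)%R) -> (forall b, (0 <= g b)%R) ->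
  \esum_(b in [set: T2]) (g b)%:E \is a fin_num ->
  \esum_(p in [set: T1 * T2]) (f p.1 * g p.2)%:E =
  (\esum_(a in [set: T1]) (f a)%:E) * (\esum_(b in [set: T2]) (g b)%:E).
Proof.
move=> f0 g0 fin.
have -> : [set: T1 * T2] = [set: T1] `*`` (fun=> [set: T2]) by apply/seteqP; split.
rewrite -(esum_esum (a := fun a b => (f a * g b)%:E)); last first.
  by move=> a b _ _; rewrite lee_fin mulr_ge0.
have c0 : (0 <= fine (\esum_(b in [set: T2]) (g b)%:E))%R.
  by rewrite fine_ge0 // esum_ge0 // => b _; rewrite lee_fin.
have fe a : (0 <= (f a)%:E) by rewrite lee_fin.
rewrite -(fineK fin) muleC -esumZl //.
by apply: eq_esum => a _; rewrite muleC (fineK fin) -esumZl //.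
Qed.

Lemma exp2 w w' (F G : U -> R) : w != w' ->
  (forall a, (0 <= F a)%R) -> (forall a, (0 <= G a)%R) ->
  \esum_(b in [set: U]) (G b * PhiU w' b)%:E \is a fin_num ->
  \int[Pr]_om (F (u w om) * G (u w' om))%:E =
  (\esum_(a in [set: U]) (F a * PhiU w a)%:E) *
  (\esum_(b in [set: U]) (G b * PhiU w' b)%:E).
Proof.
move=> ww' F0 G0 fin.
pose A (p : U * U) := [set om | u w om = p.1 /\ u w' om = p.2].
have mA p : measurable (A p).
  rewrite /A (_ : [set _ | _] = [set om | u w om = p.1] `&` [set om | u w' om = p.2]) //.
  by apply: measurableI; exact: hc.1.
have e om : (F (u w om) * G (u w' om))%:E = \esum_(p in [set: U * U])
    ((F p.1 * G p.2)%:E * (\1_(A p) om)%:E).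
  rewrite (@esum_single _ _ _ (u w om, u w' om)).
  - by rewrite indicE mem_set // mule1.
  - move=> p hp; rewrite indicE memNset ?mule0 //.
    by move=> [/= h1 h2]; apply: hp; rewrite h1 h2; case: p {h1 h2}.
  - by rewrite mule_ge0 // lee_fin mulr_ge0.
under eq_integral do rewrite e.
rewrite integral_esum; last 2 first.
- move=> p; apply: measurable_funeM; apply/measurable_EFinP.
  exact: measurable_indic.
- by move=> p om; rewrite mule_ge0 // lee_fin mulr_ge0.
rewrite -esum_prod //; last 2 first.
- by move=> a; rewrite mulr_ge0.
- by move=> a; rewrite mulr_ge0.
apply: eq_esum => p _.
rewrite ge0_integralZl_EFin //; last 2 first.
- by apply/measurable_EFinP; exact: measurable_indic.
- by rewrite mulr_ge0.
rewrite integral_indic ?setIT //.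
rewrite /A; case: p => a b /=; rewrite (@prob2 _ _ _ _ _ _ _ _ hc) // -EFinM; congr (_%:E).
by rewrite mulrACA.
Qed.

End Disc2.
Section IntHelp.
Local Open Scope ereal_scope.
Context {R : realType} d (T : measurableType d) (mu : {measure set T -> \bar R}).

Lemma iD (f g : T -> \bar R) : (forall x, 0 <= f x) -> measurable_fun setT f ->
  (forall x, 0 <= g x) -> measurable_fun setT g ->
  \int[mu]_x (f x + g x) = \int[mu]_x f x + \int[mu]_x g x.
Proof. by move=> f0 mf g0 mg; apply: ge0_integralD. Qed.

Lemma iZ (k : R) (f : T -> \bar R) : (0 <= k)%R -> (forall x, 0 <= f x) ->
  measurable_fun setT f ->
  \int[mu]_x (k%:E * f x) = k%:E * \int[mu]_x f x.
Proof. by move=> k0 f0 mf; apply: ge0_integralZl_EFin. Qed.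

Lemma ile (f g : T -> \bar R) : (forall x, 0 <= f x) -> measurable_fun setT f ->
  measurable_fun setT g -> (forall x, f x <= g x) ->
  \int[mu]_x f x <= \int[mu]_x g x.
Proof. by move=> f0 mf mg fg; apply: ge0_le_integral. Qed.

End IntHelp.
Arguments iD {R d T} mu {f g}.
Arguments iZ {R d T} mu k {f}.
Arguments ile {R d T} mu {f g}.
Section AbsDev.
Context {R : realType} d (Omega : measurableType d) (mu : probability Omega R).

Lemma int_cst (r : R) : (\int[mu]_om r%:E = r%:E)%E.
Proof. rewrite integral_cst // -[X in _ = X]mule1; congr (_ * _)%E; exact: probability_setT. Qed.

Lemma absdev (X : Omega -> R) (c s k : R) :
  measurable_fun setT X -> (forall om, 0 <= X om) -> 0 <= c -> 0 < k ->
  (\int[mu]_om (X om)%:E = c%:E)%E ->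
  (\int[mu]_om ((X om) ^+ 2)%:E <= (s + c ^+ 2)%:E)%E ->
  (\int[mu]_om (`|X om - c|)%:E <= (k + s / (4 * k))%:E)%E.
Proof.
move=> mX X0 c0 k0 hX hX2.
set be := (4 * k)^-1.
have be0 : 0 < be by rewrite invr_gt0 mulr_gt0.
have pw om : `|X om - c| + (2 * c * be) * X om <= k + be * (X om ^+ 2 + c ^+ 2).
  have h : `|X om - c| <= k + (X om - c) ^+ 2 * be.
    rewrite -(real_normK (num_real (X om - c))).
    set t := `|X om - c|.
    have t0 : 0 <= t := normr_ge0 _.
    have e : 4 * k * be = 1 by rewrite /be mulfV // gt_eqF // mulr_gt0.
    have e1 : 4 * k * be * t = t by rewrite e mul1r.
    have e2 : 4 * k * be * k = k by rewrite e mul1r.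
    have := mulr_ge0 (ltW be0) (sqr_ge0 (t - 2 * k)).
    nra.
  lra.
have cb0 : 0 <= 2 * c * be by rewrite mulr_ge0 // ?mulr_ge0 // ltW.
have mXE : measurable_fun setT (fun om => (X om)%:E) by apply/measurable_EFinP.
have mAr : measurable_fun setT (fun om => `|X om - c|).
  apply: measurableT_comp; first exact: normr_measurable.
  by apply: measurable_funB => //; exact: measurable_cst.
have mA : measurable_fun setT (fun om => (`|X om - c|)%:E) by apply/measurable_EFinP.
have mX2r : measurable_fun setT (fun om => X om ^+ 2) by exact: measurable_funX.
have mX2 : measurable_fun setT (fun om => (X om ^+ 2)%:E) by apply/measurable_EFinP.
have mc : forall r : R, measurable_fun setT (fun _ : Omega => r%:E).
  move=> r; exact: measurable_cst.
have L : (\int[mu]_om (`|X om - c|)%:E + ((2 * c * be) * c)%:E =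
   \int[mu]_om (`|X om - c| + (2 * c * be) * X om)%:E)%E.
  under [RHS]eq_integral do rewrite EFinD EFinM.
  rewrite (iD mu _ mA _ (measurable_funeM _ mXE)); last first.
    by move=> om; rewrite -EFinM lee_fin mulr_ge0.
    by move=> om; rewrite lee_fin.
  by rewrite (iZ mu _ cb0 _ mXE) ?hX ?EFinM // => om; rewrite lee_fin.
have Rr : (\int[mu]_om (k + be * (X om ^+ 2 + c ^+ 2))%:E <=
   (k + be * ((s + c ^+ 2) + c ^+ 2))%:E)%E.
  under eq_integral do rewrite EFinD EFinM EFinD.
  rewrite (iD mu _ (mc k) _ (measurable_funeM _ (emeasurable_funD mX2 (mc _)))); last 2 first.
  - by move=> om; rewrite lee_fin ltW.
  - move=> om; rewrite -EFinD -EFinM lee_fin; apply: mulr_ge0; first exact: ltW.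
    by rewrite addr_ge0 // sqr_ge0.
  rewrite int_cst (iZ mu _ (ltW be0) _ (emeasurable_funD mX2 (mc _))); last first.
    by move=> om; rewrite -EFinD lee_fin addr_ge0 // sqr_ge0.
  rewrite (iD mu _ mX2 _ (mc _)); last 2 first.
  - by move=> om; rewrite lee_fin sqr_ge0.
  - by move=> om; rewrite lee_fin sqr_ge0.
  rewrite int_cst EFinD; apply: leeD => //.
  rewrite [X in (_ <= X)%E]EFinM; apply: lee_wpmul2l; first by rewrite lee_fin ltW.
  by rewrite EFinD; apply: leeD.
have T : (\int[mu]_om (`|X om - c|)%:E + ((2 * c * be) * c)%:E <=
   (k + be * ((s + c ^+ 2) + c ^+ 2))%:E)%E.
  rewrite L; apply: le_trans Rr; apply: (ile mu).
  - by move=> om; rewrite lee_fin addr_ge0 // mulr_ge0.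
  - apply/measurable_EFinP; apply: measurable_funD => //.
    by apply: measurable_funM => //; exact: measurable_cst.
  - apply/measurable_EFinP; apply: measurable_funD; first exact: measurable_cst.
    apply: measurable_funM; first exact: measurable_cst.
    by apply: measurable_funD => //; exact: measurable_cst.
  - by move=> om; rewrite lee_fin.
have -> : k + s / (4 * k) = (k + be * ((s + c ^+ 2) + c ^+ 2)) - (2 * c * be) * c.
  by rewrite /be; ring.
by rewrite EFinB leeBrDr.
Qed.
End AbsDev.
Arguments mdisc {R W U PhiU d Omega Pr u} hc {d' Y} w F.
Arguments exp1 {R W U PhiU d Omega Pr u} hc w F.
Arguments exp2 {R W U PhiU d Omega Pr u} hc PhiU0 w w' F G.
Section Pmf.
Context {R : realType}.
Lemma pmf_ge0 (T : countType) (p : T -> R) : is_pmf p -> forall t, 0 <= p t.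
Proof. by case. Qed.

Lemma esum_le1 (T : countType) (a : T -> \bar R) t : (forall t, 0 <= a t)%E ->
  (a t <= \esum_(t in [set: T]) a t)%E.
Proof.
move=> a0; apply: esum_ge; exists [set t]; first by split; [exact: finite_set1|].
by rewrite fsbig_set1.
Qed.

Lemma pmf_le1 (T : countType) (p : T -> R) : is_pmf p -> forall t, p t <= 1.
Proof.
move=> [p0 p1] t; rewrite -lee_fin -p1.
by apply: (@esum_le1 _ (fun t => (p t)%:E)) => s; rewrite lee_fin.
Qed.

Lemma esum_swap (T1 T2 : choiceType) (f : T1 -> T2 -> \bar R) :
  (forall i j, 0 <= f i j)%E ->
  (\esum_(i in [set: T1]) \esum_(j in [set: T2]) f i j =
   \esum_(j in [set: T2]) \esum_(i in [set: T1]) f i j)%E.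
Proof.
move=> f0.
rewrite (esum_esum (J := fun _ => [set: T2])) //.
rewrite (esum_esum (J := fun _ => [set: T1]) (a := fun j i => f i j)) //.
rewrite (reindex_esum ([set: T2] `*`` fun=> [set: T1]) ([set: T1] `*`` fun=> [set: T2])
   (fun x => (x.2, x.1))) //.
split.
- by move=> [i j].
- by move=> [i1 i2] [j1 j2] /= _ _ [] -> ->.
- by move=> [i1 i2] _; exists (i2, i1).
Qed.

Lemma esumZr_fin (T : countType) (a : T -> \bar R) (M : \bar R) :
  (forall t, 0 <= a t)%E -> (0 <= M)%E -> M \is a fin_num ->
  (\esum_(t in [set: T]) (a t * M) = (\esum_(t in [set: T]) a t) * M)%E.
Proof.
move=> a0 M0 fM; rewrite -(fineK fM) muleC -esumZl //; last by rewrite fine_ge0.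
by apply: eq_esum => t _; rewrite muleC.
Qed.

End Pmf.
Arguments pmf_ge0 {R T p}.
Arguments pmf_le1 {R T p}.

Lemma esum_pair {R : realType} (T1 T2 : choiceType) (f : T1 * T2 -> \bar R) :
  (forall p, 0 <= f p)%E ->
  (\esum_(p in [set: T1 * T2]) f p = \esum_(i in [set: T1]) \esum_(j in [set: T2]) f (i, j))%E.
Proof.
move=> f0.
have -> : [set: T1 * T2] = [set: T1] `*`` (fun=> [set: T2]) by apply/seteqP; split.
rewrite (esum_esum (a := fun i j => f (i, j))) //.
by apply: eq_esum => -[i j].
Qed.
Section Main.
Context {R : realType} (W U V : countType) (PhiW : W -> R) (PhiU : W -> U -> R)
  (PhiV : W -> U -> V -> R) d (Omega : measurableType d) (Pr : probability Omega R)
  (u : W -> Omega -> U).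
Hypotheses (pW : is_pmf PhiW) (pU : forall w, is_pmf (PhiU w))
  (pV : forall w x, is_pmf (PhiV w x)) (hc : random_codebook PhiU Pr u).
Variable g : R.
Hypothesis g0 : 0 < g.

Let W0 w : 0 <= PhiW w := pmf_ge0 pW w.
Let U0 w x : 0 <= PhiU w x := pmf_ge0 (pU w) x.
Let V0 w x v : 0 <= PhiV w x v := pmf_ge0 (pV w x) v.
Let W1 w : PhiW w <= 1 := pmf_le1 pW w.
Let U1 w x : PhiU w x <= 1 := pmf_le1 (pU w) x.
Let V1 w x v : PhiV w x v <= 1 := pmf_le1 (pV w x) v.

Definition Qsum v : \bar R :=
  \esum_(x in [set: W * U]) (PhiW x.1 * PhiU x.1 x.2 * PhiV x.1 x.2 v)%:E.
Definition q v := PhiVmarg PhiW PhiU PhiV v.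
Lemma qE v : q v = fine (Qsum v). Proof. by []. Qed.

Definition aa w x v := PhiW w * PhiV w x v.
Definition typ w x v := aa w x v <= g * q v.
Definition bt w x v := if typ w x v then aa w x v else 0.
Definition ct w x v := if typ w x v then 0 else aa w x v.

Lemma aa0 w x v : 0 <= aa w x v. Proof. by rewrite mulr_ge0. Qed.
Lemma aa1 w x v : aa w x v <= PhiW w.
Proof. by rewrite /aa -[leRHS]mulr1 ler_wpM2l. Qed.
Lemma bt0 w x v : 0 <= bt w x v. Proof. by rewrite /bt; case: ifP => // _; exact: aa0. Qed.
Lemma ct0 w x v : 0 <= ct w x v. Proof. by rewrite /ct; case: ifP => // _; exact: aa0. Qed.
Lemma btct w x v : bt w x v + ct w x v = aa w x v.
Proof. by rewrite /bt /ct; case: ifP; rewrite ?addr0 ?add0r. Qed.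
Lemma bt1 w x v : bt w x v <= PhiW w.
Proof. by rewrite /bt; case: ifP => _; [exact: aa1|]. Qed.
Lemma ct1 w x v : ct w x v <= PhiW w.
Proof. by rewrite /ct; case: ifP => _; [|exact: aa1]. Qed.

Definition Q1 v := (\esum_(w in [set: W]) \esum_(x in [set: U]) (ct w x v * PhiU w x)%:E)%E.
Definition Q2 v := (\esum_(w in [set: W]) \esum_(x in [set: U]) (bt w x v * PhiU w x)%:E)%E.

Lemma QsumE v : Qsum v =
  (\esum_(w in [set: W]) \esum_(x in [set: U]) (aa w x v * PhiU w x)%:E)%E.
Proof.
rewrite /Qsum.
have -> : [set: W * U] = [set: W] `*`` (fun=> [set: U]) by apply/seteqP; split.
rewrite -(esum_esum (a := fun w x => (PhiW w * PhiU w x * PhiV w x v)%:E)); last first.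
  by move=> w x _ _; rewrite lee_fin !mulr_ge0.
apply: eq_esum => w _; apply: eq_esum => x _; congr (_%:E).
by rewrite /aa mulrAC.
Qed.

Lemma Qsplit v : Qsum v = (Q1 v + Q2 v)%E.
Proof.
rewrite QsumE /Q1 /Q2 -esumD; last 2 first.
- by move=> w _; apply: esum_ge0 => x _; rewrite lee_fin mulr_ge0 // ct0.
- by move=> w _; apply: esum_ge0 => x _; rewrite lee_fin mulr_ge0 // bt0.
apply: eq_esum => w _; rewrite -esumD; last 2 first.
- by move=> x _; rewrite lee_fin mulr_ge0 // ct0.
- by move=> x _; rewrite lee_fin mulr_ge0 // bt0.
by apply: eq_esum => x _; rewrite -EFinD -mulrDl addrC btct.
Qed.

Lemma Qtot : (\esum_(v in [set: V]) Qsum v = 1)%E.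
Proof.
rewrite /Qsum esum_swap; last by move=> v x; rewrite lee_fin !mulr_ge0.
transitivity (\esum_(x in [set: W * U]) (PhiW x.1 * PhiU x.1 x.2)%:E)%E.
  apply: eq_esum => x _.
  under eq_esum do rewrite EFinM.
  rewrite esumZl ?mulr_ge0 //; last by move=> v; rewrite lee_fin.
  by rewrite (pV x.1 x.2).2 mule1.
have -> : [set: W * U] = [set: W] `*`` (fun=> [set: U]) by apply/seteqP; split.
rewrite -(esum_esum (a := fun w x => (PhiW w * PhiU w x)%:E)); last first.
  by move=> w x _ _; rewrite lee_fin !mulr_ge0.
transitivity (\esum_(w in [set: W]) (PhiW w)%:E)%E; last exact: pW.2.
apply: eq_esum => w _; under eq_esum do rewrite EFinM.
rewrite esumZl //; last by move=> x; rewrite lee_fin.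
by rewrite (pU w).2 mule1.
Qed.


Lemma Qsum0 v : (0 <= Qsum v)%E.
Proof. by apply: esum_ge0 => x _; rewrite lee_fin !mulr_ge0. Qed.

Lemma Qsum1 v : (Qsum v <= 1)%E.
Proof. rewrite -Qtot; apply: esum_le1 => v'; exact: Qsum0. Qed.

Lemma Q10 v : (0 <= Q1 v)%E.
Proof. by do 2 apply: esum_ge0 => ? _; rewrite lee_fin mulr_ge0 // ct0. Qed.
Lemma Q20 v : (0 <= Q2 v)%E.
Proof. by do 2 apply: esum_ge0 => ? _; rewrite lee_fin mulr_ge0 // bt0. Qed.

Lemma fin01 (x : \bar R) : (0 <= x)%E -> (x <= 1)%E -> x \is a fin_num.
Proof. by move=> x0 x1; rewrite ge0_fin_numE // (le_lt_trans x1) // ltry. Qed.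


Lemma Qsumfin v : Qsum v \is a fin_num.
Proof. exact: fin01 (Qsum0 v) (Qsum1 v). Qed.
Lemma Q1le v : (Q1 v <= Qsum v)%E.
Proof. by rewrite Qsplit leeDl // Q20. Qed.
Lemma Q2le v : (Q2 v <= Qsum v)%E.
Proof. by rewrite Qsplit leeDr // Q10. Qed.
Lemma Q1fin v : Q1 v \is a fin_num.
Proof. exact: fin01 (Q10 v) (le_trans (Q1le v) (Qsum1 v)). Qed.
Lemma Q2fin v : Q2 v \is a fin_num.
Proof. exact: fin01 (Q20 v) (le_trans (Q2le v) (Qsum1 v)). Qed.


Lemma qsplit v : q v = fine (Q1 v) + fine (Q2 v).
Proof. rewrite qE Qsplit; exact: (fineD (Q1fin v) (Q2fin v)). Qed.
Lemma q0 v : 0 <= q v.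
Proof. rewrite qE; exact: (fine_ge0 (Qsum0 v)). Qed.
Lemma Q2leq v : fine (Q2 v) <= q v.
Proof. rewrite qE; exact: (fine_le (Q2fin v) (Qsumfin v) (Q2le v)). Qed.
Lemma Q2ge0 v : 0 <= fine (Q2 v).
Proof. exact: (fine_ge0 (Q20 v)). Qed.


Definition Pe om v := (\esum_(w in [set: W]) (aa w (u w om) v)%:E)%E.
Definition P1 om v := (\esum_(w in [set: W]) (ct w (u w om) v)%:E)%E.
Definition P2 om v := (\esum_(w in [set: W]) (bt w (u w om) v)%:E)%E.

Lemma Pe0 om v : (0 <= Pe om v)%E.
Proof. by apply: esum_ge0 => w _; rewrite lee_fin aa0. Qed.
Lemma P10 om v : (0 <= P1 om v)%E.
Proof. by apply: esum_ge0 => w _; rewrite lee_fin ct0. Qed.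
Lemma P20 om v : (0 <= P2 om v)%E.
Proof. by apply: esum_ge0 => w _; rewrite lee_fin bt0. Qed.
Lemma Pe1 om v : (Pe om v <= 1)%E.
Proof.
rewrite -pW.2; apply: le_esum => w _; rewrite lee_fin; exact: aa1.
Qed.
Lemma Psplit om v : Pe om v = (P1 om v + P2 om v)%E.
Proof.
rewrite /Pe /P1 /P2 -esumD; last 2 first.
- by move=> w _; rewrite lee_fin ct0.
- by move=> w _; rewrite lee_fin bt0.
by apply: eq_esum => w _; rewrite -EFinD addrC btct.
Qed.
Lemma Pefin om v : Pe om v \is a fin_num.
Proof. exact: fin01 (Pe0 om v) (Pe1 om v). Qed.
Lemma P1fin om v : P1 om v \is a fin_num.
Proof.
apply: fin01 (P10 om v) (le_trans _ (Pe1 om v)).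
by rewrite Psplit leeDl // P20.
Qed.
Lemma P2fin om v : P2 om v \is a fin_num.
Proof.
apply: fin01 (P20 om v) (le_trans _ (Pe1 om v)).
by rewrite Psplit leeDr // P10.
Qed.

Lemma mPe v : measurable_fun setT (fun om => Pe om v).
Proof.
apply: measurable_esum => [w|w om]; last by rewrite lee_fin aa0.
exact: (mdisc hc w (fun x => (aa w x v)%:E)).
Qed.
Lemma mP1 v : measurable_fun setT (fun om => P1 om v).
Proof.
apply: measurable_esum => [w|w om]; last by rewrite lee_fin ct0.
exact: (mdisc hc w (fun x => (ct w x v)%:E)).
Qed.
Lemma mP2 v : measurable_fun setT (fun om => P2 om v).
Proof.
apply: measurable_esum => [w|w om]; last by rewrite lee_fin bt0.
exact: (mdisc hc w (fun x => (bt w x v)%:E)).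
Qed.

Lemma intP1 v : (\int[Pr]_om P1 om v = Q1 v)%E.
Proof.
rewrite /P1 integral_esum; last 2 first.
- by move=> w; exact: (mdisc hc w (fun x => (ct w x v)%:E)).
- by move=> w om; rewrite lee_fin ct0.
apply: eq_esum => w _; apply: (exp1 hc w (fun x => ct w x v)) => x; exact: ct0.
Qed.
Lemma intP2 v : (\int[Pr]_om P2 om v = Q2 v)%E.
Proof.
rewrite /P2 integral_esum; last 2 first.
- by move=> w; exact: (mdisc hc w (fun x => (bt w x v)%:E)).
- by move=> w om; rewrite lee_fin bt0.
apply: eq_esum => w _; apply: (exp1 hc w (fun x => bt w x v)) => x; exact: bt0.
Qed.


Definition jnt (y : (W * U) * V) := joint PhiW PhiU PhiV y.

Lemma jnt0 y : 0 <= jnt y.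
Proof. by rewrite /jnt /joint !mulr_ge0. Qed.

Lemma info_gt w x v : 0 < jnt ((w, x), v) ->
  (log2 g < info_WU_V PhiW PhiU PhiV w x v - info_W PhiW w) = (g * q v < aa w x v).
Proof.
rewrite /jnt /joint /= => j0.
have pW0 : 0 < PhiW w.
  rewrite lt_def W0 andbT; apply/eqP => h; move: j0; by rewrite h !mul0r ltxx.
have pU0 : 0 < PhiU w x.
  rewrite lt_def U0 andbT; apply/eqP => h; move: j0; by rewrite h mulr0 mul0r ltxx.
have pV0 : 0 < PhiV w x v.
  rewrite lt_def V0 andbT; apply/eqP => h; move: j0; by rewrite h mulr0 ltxx.
have qpos : 0 < q v.
  apply: (lt_le_trans j0); rewrite qE -lee_fin fineK ?Qsumfin //.
  rewrite /Qsum; apply: (@esum_le1 _ _ (fun x0 : W * U => (PhiW x0.1 * PhiU x0.1 x0.2 * PhiV x0.1 x0.2 v)%:E) (w, x)).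
  by move=> t; rewrite lee_fin !mulr_ge0.
have l2 : 0 < ln (2 : R) by rewrite ln_gt0 // ltr1n.
rewrite /info_WU_V /info_W /log2 /q.
rewrite -mulrBl ltr_pM2r ?invr_gt0 //.
rewrite ln_div ?posrE // ln_div ?posrE ?ltr01 // ln1 sub0r opprK.
have -> : (ln g < ln (PhiV w x v) - ln (PhiVmarg PhiW PhiU PhiV v) + ln (PhiW w))
   = (ln (g * q v) < ln (PhiW w * PhiV w x v)).
  rewrite !lnM ?posrE //; apply/idP/idP; rewrite /q; lra.
by rewrite ltr_ln ?posrE ?mulr_gt0.
Qed.


Lemma ctE w x v : (ct w x v * PhiU w x)%:E =
  (if ((w, x), v) \in [set y : (W * U) * V | 0 < jnt y /\
      info_WU_V PhiW PhiU PhiV y.1.1 y.1.2 y.2 - info_W PhiW y.1.1 > log2 g]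
   then (jnt ((w, x), v))%:E else 0%E).
Proof.
have ej : aa w x v * PhiU w x = jnt ((w, x), v) by rewrite /aa /jnt /joint /=; ring.
have [j0|j0] := boolP (0 < jnt ((w, x), v)).
  have := info_gt w x v j0 => /= ig.
  case: ifPn => [/set_mem /= [_ lt]|/negP nin].
    rewrite ig in lt; rewrite /ct /typ ifF ?ej //.
    by apply/negbTE; rewrite -ltNge.
  rewrite /ct /typ ifT; first by rewrite mul0r.
  by rewrite leNgt -ig; apply/negP => hh; apply: nin; apply/mem_set; split.
have jz : jnt ((w, x), v) = 0.
  by apply/eqP; rewrite eq_le jnt0 andbT leNgt.
rewrite ifF; last by apply/negbTE/negP => /set_mem [] /=; rewrite jz ltxx.
by rewrite /ct; case: ifP => _; rewrite ?mul0r // ej jz.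
Qed.

Lemma Q1tot : (\esum_(v in [set: V]) Q1 v = prob_info_gt PhiW PhiU PhiV (log2 g))%E.
Proof.
rewrite /prob_info_gt [in RHS]esum_mkcond esum_pair; last first.
  by move=> p; case: ifP => // _; rewrite lee_fin jnt0.
rewrite esum_pair; last first.
  by move=> p; apply: esum_ge0 => v _; case: ifP => // _; rewrite lee_fin jnt0.
rewrite /Q1 [LHS]esum_swap; last first.
  by move=> v w; apply: esum_ge0 => x _; rewrite lee_fin mulr_ge0 // ct0.
apply: eq_esum => w _; rewrite [LHS]esum_swap; last first.
  by move=> v x; rewrite lee_fin mulr_ge0 // ct0.
by apply: eq_esum => x _; apply: eq_esum => v _; rewrite ctE.
Qed.


Lemma bt_le w x v : bt w x v <= g * q v.
Proof.
rewrite /bt /typ; case: ifP => // _; by rewrite mulr_ge0 ?q0 // ltW.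
Qed.

Definition mm w v := (\esum_(x in [set: U]) (bt w x v * PhiU w x)%:E)%E.

Lemma mm0 w v : (0 <= mm w v)%E.
Proof. by apply: esum_ge0 => x _; rewrite lee_fin mulr_ge0 // bt0. Qed.

Lemma mm_fin w v : mm w v \is a fin_num.
Proof.
apply: fin01 (mm0 w v) _; rewrite -(pU w).2; apply: le_esum => x _.
rewrite lee_fin -[leRHS]mul1r ler_wpM2r //.
exact: le_trans (bt1 w x v) (W1 w).
Qed.

Lemma Q2E v : Q2 v = (\esum_(w in [set: W]) mm w v)%E.
Proof. by []. Qed.

Lemma esum_mul (T : countType) (x y : T -> R) :
  (forall t, 0 <= x t) -> (forall t, 0 <= y t) ->
  (\esum_(t in [set: T]) (y t)%:E) \is a fin_num ->
  ((\esum_(t in [set: T]) (x t)%:E) * (\esum_(t in [set: T]) (y t)%:E) =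
   \esum_(i in [set: T]) \esum_(j in [set: T]) (x i * y j)%:E)%E.
Proof.
move=> x0 y0 fy; rewrite -esum_prod // esum_pair //.
by move=> p; rewrite lee_fin mulr_ge0.
Qed.

Lemma mBB w w' v : measurable_fun setT
   (fun om => (bt w (u w om) v * bt w' (u w' om) v)%:E).
Proof.
apply/measurable_EFinP; apply: measurable_funM.
  exact: (mdisc hc w (fun x => bt w x v)).
exact: (mdisc hc w' (fun x => bt w' x v)).
Qed.

Lemma termbound w w' v :
  (\int[Pr]_om (bt w (u w om) v * bt w' (u w' om) v)%:E <=
   (if w == w' then (g * q v)%:E * mm w v else 0) + mm w v * mm w' v)%E.
Proof.
have [<-|ww'] := eqVneq w w'.
  apply: le_trans (leeDl _ _); last by rewrite mule_ge0 // mm0.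
  apply: le_trans (_ : (\int[Pr]_om ((g * q v)%:E * (bt w (u w om) v)%:E) <= _)%E).
    apply: (ile Pr) => //.
    - by move=> om; rewrite lee_fin mulr_ge0 // bt0.
    - exact: mBB.
    - apply: measurable_funeM; apply/measurable_EFinP.
      exact: (mdisc hc w (fun x => bt w x v)).
    - move=> om; rewrite -EFinM lee_fin ler_wpM2r ?bt0 //; exact: bt_le.
  rewrite (iZ Pr); last 3 first.
  - by rewrite mulr_ge0 ?q0 // ltW.
  - by move=> om; rewrite lee_fin bt0.
  - apply/measurable_EFinP; exact: (mdisc hc w (fun x => bt w x v)).
  rewrite (exp1 hc w (fun x => bt w x v)) //; exact: (bt0 w ^~ v).
rewrite add0e (exp2 hc U0 w w' (fun x => bt w x v) (fun x => bt w' x v)) //.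
- by move=> x; exact: bt0.
- by move=> x; exact: bt0.
- exact: mm_fin.
Qed.


Lemma P2sq_int v :
  (\int[Pr]_om (P2 om v * P2 om v) <= (g * q v)%:E * Q2 v + Q2 v * Q2 v)%E.
Proof.
have gq0 : 0 <= g * q v by rewrite mulr_ge0 ?q0 // ltW.
under eq_integral => om _ do rewrite /P2 (@esum_mul W _ _ (fun w => bt0 w (u w om) v) (fun w => bt0 w (u w om) v) (P2fin om v)).
rewrite integral_esum; last 2 first.
- move=> w; apply: measurable_esum => [w'|w' om]; first exact: mBB.
  by rewrite lee_fin mulr_ge0 // bt0.
- by move=> w om; apply: esum_ge0 => w' _; rewrite lee_fin mulr_ge0 // bt0.
have hint w : (\int[Pr]_om (\esum_(j in [set: W]) (bt w (u w om) v * bt j (u j om) v)%:E)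
   = \esum_(j in [set: W]) \int[Pr]_om (bt w (u w om) v * bt j (u j om) v)%:E)%E.
  apply: integral_esum => [w'|w' om]; first exact: mBB.
  by rewrite lee_fin mulr_ge0 // bt0.
under eq_esum => w _ do rewrite hint.
apply: le_trans (_ : (\esum_(w in [set: W]) \esum_(w' in [set: W])
   ((if w == w' then (g * q v)%:E * mm w v else 0) + mm w v * mm w' v) <= _)%E).
  by apply: le_esum => w _; apply: le_esum => w' _; exact: termbound.
rewrite (_ : (\esum_(w in [set: W]) \esum_(w' in [set: W])
   ((if w == w' then (g * q v)%:E * mm w v else 0) + mm w v * mm w' v) =
   \esum_(w in [set: W]) ((g * q v)%:E * mm w v + mm w v * Q2 v))%E); last first.
  apply: eq_esum => w _.
  rewrite esumD; last 2 first.
  - by move=> w' _; case: ifP => // _; rewrite mule_ge0 ?mm0 // lee_fin.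
  - by move=> w' _; rewrite mule_ge0 ?mm0.
  rewrite (@esum_single _ _ _ w); last 2 first.
  - by move=> w' /eqP; rewrite eq_sym => /negbTE ->.
  - by rewrite eqxx mule_ge0 ?mm0 // lee_fin.
  rewrite eqxx; congr (_ + _)%E.
  rewrite -(fineK (mm_fin w v)) esumZl ?fine_ge0 ?mm0 //.
  by move=> w'; exact: mm0.
rewrite esumD; last 2 first.
- by move=> w _; rewrite mule_ge0 ?mm0 // lee_fin.
- by move=> w _; rewrite mule_ge0 ?mm0 ?Q20.
rewrite esumZl //; last by move=> w; exact: mm0.
by rewrite esumZr_fin ?Q20 ?Q2fin //; move=> w; exact: mm0.
Qed.


Lemma fin_ineq (dl qq c : R) : 0 < dl -> 0 < qq -> 0 <= c -> c <= qq ->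
  dl * qq + g * qq * c / (4 * (dl * qq)) <= (dl + g / (4 * dl)) * qq.
Proof.
move=> dl0 q0' c0 cq.
have -> : g * qq * c / (4 * (dl * qq)) = (g / (4 * dl)) * c.
  by field; rewrite !gt_eqF.
have A0 : 0 <= g / (4 * dl) by rewrite divr_ge0 ?mulr_ge0 ?ltW.
set A := g / (4 * dl).
rewrite (mulrDl dl) lerD2l ler_wpM2l //.
Qed.

Lemma intD v (dl : R) : 0 < dl ->
  (\int[Pr]_om (`|fine (P2 om v) - fine (Q2 v)|)%:E <= ((dl + g / (4 * dl)) * q v)%:E)%E.
Proof.
move=> dl0.
have [qz|qpos] := eqVneq (q v) 0.
  have c0 : fine (Q2 v) = 0.
    by apply/eqP; rewrite eq_le Q2ge0 andbT -qz Q2leq.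
  have p0 om : P2 om v = 0%E.
    rewrite /P2 esum1 // => w _; congr (_%:E); apply/eqP.
    by rewrite eq_le bt0 andbT (le_trans (bt_le _ _ _)) // qz mulr0.
  rewrite qz mulr0; under eq_integral => om _ do rewrite p0 c0 /= subr0 normr0.
  by rewrite int_cst.
have qp : 0 < q v by rewrite lt_def qpos q0.
have mX : measurable_fun setT (fun om => fine (P2 om v)).
  apply: measurableT_comp; first exact: fine_measurable.
  exact: mP2.
have := @absdev _ _ _ Pr (fun om => fine (P2 om v)) (fine (Q2 v)) (g * q v * fine (Q2 v)) (dl * q v) mX.
move=> /(_ (fun om => fine_ge0 (P20 om v)) (Q2ge0 v) (mulr_gt0 dl0 qp)).
have e1 : (\int[Pr]_om (fine (P2 om v))%:E = (fine (Q2 v))%:E)%E.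
  under eq_integral => om _ do rewrite (fineK (P2fin om v)).
  by rewrite intP2 (fineK (Q2fin v)).
have e2 : (\int[Pr]_om ((fine (P2 om v)) ^+ 2)%:E <=
   (g * q v * fine (Q2 v) + fine (Q2 v) ^+ 2)%:E)%E.
  under eq_integral => om _ do rewrite expr2 EFinM (fineK (P2fin om v)).
  apply: le_trans (P2sq_int v) _.
  by rewrite -(fineK (Q2fin v)) -!EFinM -EFinD expr2.
move=> /(_ e1 e2) h; apply: le_trans h _.
rewrite lee_fin; apply: fin_ineq => //; [exact: Q2ge0 | exact: Q2leq].
Qed.


Definition Fv om v := (`|fine (Pe om v) - q v|)%:E.
Definition Dv om v := (`|fine (P2 om v) - fine (Q2 v)|)%:E.
Definition Gv om v := (P1 om v + (Q1 v + Dv om v))%E.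

Lemma mfine (f : Omega -> \bar R) : measurable_fun setT f ->
  measurable_fun setT (fun om => fine (f om)).
Proof.
move=> mf; apply: measurableT_comp; first exact: fine_measurable.
exact: mf.
Qed.

Lemma mFv v : measurable_fun setT (Fv ^~ v).
Proof.
apply/measurable_EFinP; apply: measurableT_comp; first exact: normr_measurable.
apply: measurable_funB; first exact: mfine (mPe v).
exact: measurable_cst.
Qed.

Lemma mDv v : measurable_fun setT (Dv ^~ v).
Proof.
apply/measurable_EFinP; apply: measurableT_comp; first exact: normr_measurable.
apply: measurable_funB; first exact: mfine (mP2 v).
exact: measurable_cst.
Qed.

Lemma Gv0 om v : (0 <= Gv om v)%E.
Proof. by rewrite /Gv adde_ge0 ?P10 // adde_ge0 ?Q10 // /Dv lee_fin. Qed.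

Lemma mGv v : measurable_fun setT (Gv ^~ v).
Proof.
apply: emeasurable_funD; first exact: mP1.
apply: emeasurable_funD; first exact: measurable_cst.
exact: mDv.
Qed.

Lemma FG om v : (Fv om v <= Gv om v)%E.
Proof.
rewrite /Fv /Gv /Dv -(fineK (P1fin om v)) -(fineK (Q1fin v)) -!EFinD lee_fin.
rewrite Psplit (fineD (P1fin om v) (P2fin om v)) qsplit.
have p10 : 0 <= fine (P1 om v) by rewrite fine_ge0 // P10.
have q10 : 0 <= fine (Q1 v) by rewrite fine_ge0 // Q10.
have a1 : fine (P2 om v) - fine (Q2 v) <= `|fine (P2 om v) - fine (Q2 v)| := ler_norm _.
have a2 : - (fine (P2 om v) - fine (Q2 v)) <= `|fine (P2 om v) - fine (Q2 v)|.
  by rewrite -normrN ler_norm.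
rewrite ler_norml; apply/andP; split; lra.
Qed.

Lemma intG v (dl : R) : 0 < dl ->
  (\int[Pr]_om Gv om v <= Q1 v + (Q1 v + ((dl + g / (4 * dl)) * q v)%:E))%E.
Proof.
move=> dl0.
have hD : forall om, (0 <= Dv om v)%E by move=> om; rewrite /Dv lee_fin.
have hQD : forall om, (0 <= Q1 v + Dv om v)%E by move=> om; rewrite adde_ge0 ?Q10.
have mQD : measurable_fun setT (fun om => Q1 v + Dv om v)%E.
  apply: emeasurable_funD; first exact: measurable_cst.
  exact: mDv.
rewrite /Gv (iD Pr (fun om => P10 om v) (mP1 v) hQD mQD).
rewrite intP1 (iD Pr (fun om => Q10 v) (measurable_cst _) hD (mDv v)).
rewrite -[in X in (_ + (X + _))%E](fineK (Q1fin v)) int_cst (fineK (Q1fin v)).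
by apply: leeD2l; apply: leeD2l; exact: intD.
Qed.


Lemma tv_bound (dl : R) : 0 < dl ->
  (\int[Pr]_om tv_dist (PV_code PhiW PhiV (fun w => u w om)) (PhiVmarg PhiW PhiU PhiV)
   <= ((2%:R)^-1)%:E * (prob_info_gt PhiW PhiU PhiV (log2 g) +
        (prob_info_gt PhiW PhiU PhiV (log2 g) + (dl + g / (4 * dl))%:E)))%E.
Proof.
move=> dl0.
have K0 : 0 <= dl + g / (4 * dl).
  apply: addr_ge0; first exact: ltW.
  by apply: divr_ge0; [exact: ltW | rewrite mulr_ge0 // ltW].
have Kq v : 0 <= (dl + g / (4 * dl)) * q v by rewrite mulr_ge0 ?q0.
have e om : tv_dist (PV_code PhiW PhiV (fun w => u w om)) (PhiVmarg PhiW PhiU PhiV)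
   = (((2%:R)^-1)%:E * \esum_(v in [set: V]) Fv om v)%E by [].
under eq_integral => om _ do rewrite e.
have mF : measurable_fun setT (fun om => \esum_(v in [set: V]) Fv om v).
  apply: measurable_esum => [v|v om]; first exact: mFv.
  by rewrite /Fv lee_fin.
have mG : measurable_fun setT (fun om => \esum_(v in [set: V]) Gv om v).
  apply: measurable_esum => [v|v om]; first exact: mGv.
  by move=> *; exact: Gv0.
rewrite (iZ Pr); last 3 first.
- by rewrite invr_ge0.
- by move=> om; apply: esum_ge0 => v _; rewrite /Fv lee_fin.
- exact: mF.
apply: lee_wpmul2l; first by rewrite lee_fin invr_ge0.
apply: le_trans (_ : (\int[Pr]_om (\esum_(v in [set: V]) Gv om v) <= _)%E).
  apply: (ile Pr) => //.
  - by move=> om; apply: esum_ge0 => v _; rewrite /Fv lee_fin.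
  - by move=> om; apply: le_esum => v _; exact: FG.
rewrite integral_esum; last 2 first.
- exact: mGv.
- by move=> *; exact: Gv0.
have H : (\esum_(v in [set: V]) \int[Pr]_om Gv om v <= \esum_(v in [set: V])
   (Q1 v + (Q1 v + ((dl + g / (4 * dl)) * q v)%:E)))%E.
  by apply: le_esum => v _; exact: intG.
apply: le_trans H _.
rewrite esumD; last 2 first.
- by move=> v _; exact: Q10.
- by move=> v _; rewrite adde_ge0 ?Q10 // lee_fin.
rewrite esumD; last 2 first.
- by move=> v _; exact: Q10.
- by move=> v _; rewrite lee_fin.
rewrite Q1tot.
under eq_esum => v _ do rewrite EFinM.
rewrite esumZl; last 2 first.
- by [].
- by move=> v; rewrite lee_fin q0.
have -> : (\esum_(v in [set: V]) (q v)%:E = 1)%E.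
  rewrite -Qtot; apply: eq_esum => v _; exact: fineK (Qsumfin v).
by rewrite mule1.
Qed.


End Main.

Theorem mainTheorem11 (R : realType)
  (W U V : nat -> countType)
  (PhiW : forall n, W n -> R)
  (PhiU : forall n, W n -> U n -> R)
  (PhiV : forall n, W n -> U n -> V n -> R)
  (d : nat -> measure_display) (Omega : forall n, measurableType (d n))
  (Pr : forall n, probability (Omega n) R)
  (u : forall n, W n -> Omega n -> U n) :
  (forall n, is_pmf (PhiW n)) ->
  (forall n w, is_pmf (PhiU n w)) ->
  (forall n w x, is_pmf (PhiV n w x)) ->
  (forall n, random_codebook (PhiU n) (Pr n) (u n)) ->
  (forall tau : R,
     (fun n => prob_info_gt (PhiW n) (PhiU n) (PhiV n) tau) @ \oo --> 0%E) ->
  (fun n => (\int[Pr n]_om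
       tv_dist (PV_code (PhiW n) (PhiV n) (fun w => u n w om))
               (PhiVmarg (PhiW n) (PhiU n) (PhiV n)))%E) @ \oo --> 0%E.
Proof.
move=> hW hU hV hc hP.
set f := fun n => _.
have f0 n : (0 <= f n)%E.
  apply: integral_ge0 => om _; apply: mule_ge0; first by rewrite lee_fin invr_ge0.
  by apply: esum_ge0 => v _; rewrite lee_fin.
have ev (eta : R) : 0 < eta -> \forall n \near \oo,
    (prob_info_gt (PhiW n) (PhiU n) (PhiV n) (log2 (eta ^+ 2 / 2)) <= (eta / 4)%:E)%E.
  move=> eta0; have /fine_cvgP [fe cv] := hP (log2 (eta ^+ 2 / 2)).
  have /cvgrPdist_le /(_ (eta / 4)) := cv.
  move=> /(_ (divr_gt0 eta0 (ltr0n _ 4))) ev.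
  apply: filterS2 fe ev => n fn hn.
  rewrite -(fineK fn) lee_fin; move: hn; rewrite sub0r normrN => hn.
  exact: le_trans (ler_norm _) hn.
have bnd (eta : R) : 0 < eta -> \forall n \near \oo, (f n <= eta%:E)%E.
  move=> eta0; apply: filterS (ev eta eta0) => n hn.
  have g0 : 0 < eta ^+ 2 / 2 by rewrite divr_gt0 // exprn_gt0.
  have dl0 : 0 < eta / 2 by rewrite divr_gt0.
  apply: le_trans (@tv_bound _ _ _ _ _ _ _ _ _ _ _ (hW n) (hU n) (hV n) (hc n) _ g0 _ dl0) _.
  have -> : eta ^+ 2 / 2 / (4 * (eta / 2)) = eta / 4.
    by field; rewrite gt_eqF.
  apply: le_trans (_ : (((2%:R)^-1)%:E * ((eta / 4)%:E + ((eta / 4)%:E + (eta / 2 + eta / 4)%:E)) <= _)%E).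
    apply: lee_wpmul2l; first by rewrite lee_fin invr_ge0.
    by apply: leeD => //; apply: leeD.
  rewrite -!EFinD -EFinM lee_fin; lra.
apply/fine_cvgP; split.
  apply: filterS (bnd 1 ltr01) => n hn.
  by rewrite ge0_fin_numE // (le_lt_trans hn) // ltry.
apply/cvgrPdist_le => eta eta0.
apply: filterS (bnd eta eta0) => n hn.
have fn : f n \is a fin_num by rewrite ge0_fin_numE // (le_lt_trans hn) // ltry.
rewrite sub0r normrN ger0_norm ?fine_ge0 //.
by rewrite -lee_fin fineK.
Qed.
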